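(* Let $G:\mathbb{R}^d\to\mathbb{R}$ be convex and $L$-smooth, let $B\in\mathbb{R}^{s\times d}$ and $b$ in the column space of $B$, and let $u^0\in\mathbb{R}^d$, $R>0$, $\varepsilon>0$. Define $G^{\nu}(u)=G(u)+\frac{\nu}{2}\|u^0-u\|^2$ with $\nu=\varepsilon/R^2$. Suppose there exist $u^*\in\operatorname{Argmin}_{u:Bu=b}G(u)$ and $u^*_\nu=\operatorname{argmin}_{u:Bu=b}G^\nu(u)$, that $\min_u G(u)$ exists, and let $D=G(u^* )-\min_uG(u)$. Assume $\|u^0-u^*\|^2\le R^2$ and set $$\delta=\frac{\varepsilon^2}{32\big(D+\frac\varepsilon2\big)\big(L+\frac{\varepsilon}{R^2}\big)}.$$ If $u\in\mathbb{R}^d$ satisfies $\|u-u^*_\nu\|^2\le\delta$, then $G(u)-G(u^* )\le\varepsilon$ and $\|Bu-b\|^2\le\delta\,\sigma_{\max}^2(B)$.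
   Context: $G$ is $L$-smooth if it is differentiable and $G(u')-G(u)-\langle\nabla G(u),u'-u\rangle\le\frac L2\|u'-u\|^2$ for all $u,u'$. $\sigma_{\max}(B)$ is the largest singular value of $B$. *)

(* Defs.v *)
From HB Require Import structures.
From mathcomp Require Import all_boot all_order all_algebra.
From mathcomp Require Import all_classical all_reals all_analysis.
Set Implicit Arguments. Unset Strict Implicit. Unset Printing Implicit Defensive.
Import Order.TTheory GRing.Theory Num.Theory.
Import numFieldNormedType.Exports.
Local Open Scope classical_set_scope.
Local Open Scope ring_scope.

Definition dotv (R : realType) (d : nat) (u v : 'cV[R]_d) : R :=
  \sum_(i < d) u i 0 * v i 0.
Definition sqnorm (R : realType) (d : nat) (u : 'cV[R]_d) : R := dotv u u.

Definition gradient (R : realType) (d : nat) (G : 'cV[R]_d -> R) (u : 'cV[R]_d)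
  : 'cV[R]_d := \col_(i < d) ('d G u (delta_mx i 0 : 'cV[R]_d)).

Definition convex_fun (R : realType) (d : nat) (G : 'cV[R]_d -> R) : Prop :=
  forall (u v : 'cV[R]_d) (t : R), 0 <= t -> t <= 1 ->
    G ((1 - t) *: u + t *: v) <= (1 - t) * G u + t * G v.

Definition L_smooth (R : realType) (d : nat) (L : R) (G : 'cV[R]_d -> R) : Prop :=
  (forall u, differentiable G u) /\
  forall u u' : 'cV[R]_d,
    G u' - G u - dotv (gradient G u) (u' - u) <= L / 2 * sqnorm (u' - u).

Definition sigma_max (R : realType) (s d : nat) (B : 'M[R]_(s, d)) : R :=
  Num.sqrt (sup [set a : R | eigenvalue (B^T *m B) a]).

(* Main.v *)
Require Import Defs.
From HB Require Import structures.
From mathcomp Require Import all_boot all_order all_algebra.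
From mathcomp Require Import all_classical all_reals all_analysis.
From mathcomp Require Import ring lra.
Set Implicit Arguments. Unset Strict Implicit. Unset Printing Implicit Defensive.
Import Order.TTheory GRing.Theory Num.Theory.
Local Open Scope ring_scope.

Section LA.
Variable R : realType.

Definition qf d (M : 'M[R]_d) (x y : 'rV[R]_d) : R := (x *m M *m y^T) 0 0.
Definition nn d (x : 'rV[R]_d) : R := \sum_j x 0 j ^+ 2.

Lemma qfE d (M : 'M[R]_d) x y :
  qf M x y = \sum_i \sum_j x 0 i * M i j * y 0 j.
Proof.
rewrite /qf mxE; transitivity (\sum_j \sum_i x 0 i * M i j * y 0 j).
  by apply: eq_bigr => j _; rewrite !mxE big_distrl.
by rewrite exchange_big.
Qed.

Lemma qf1 d (x : 'rV[R]_d) : qf 1%:M x x = nn x.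
Proof. by rewrite /qf mulmx1 mxE; apply: eq_bigr => j _; rewrite mxE expr2. Qed.

Lemma nn_ge0 d (x : 'rV[R]_d) : 0 <= nn x.
Proof. by apply: sumr_ge0 => j _; exact: sqr_ge0. Qed.

Lemma nn_eq0 d (x : 'rV[R]_d) : nn x = 0 -> x = 0.
Proof.
move=> /psumr_eq0P H; apply/rowP => j; rewrite mxE.
by apply/eqP; rewrite -sqrf_eq0; apply/eqP; apply: H => // k _; exact: sqr_ge0.
Qed.

Lemma coord_le_nn d (x : 'rV[R]_d) i : x 0 i ^+ 2 <= nn x.
Proof.
rewrite /nn (bigD1 i) //= lerDl; apply: sumr_ge0 => j _; exact: sqr_ge0.
Qed.

Lemma qf_sym d (M : 'M[R]_d) x y : M^T = M -> qf M y x = qf M x y.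
Proof.
move=> HM; rewrite /qf.
have -> : (y *m M *m x^T) 0 0 = ((y *m M *m x^T)^T) 0 0 by rewrite [RHS]mxE.
by rewrite !trmx_mul trmxK HM mulmxA.
Qed.

Lemma qfDl d (M : 'M[R]_d) x y z : qf M (x + y) z = qf M x z + qf M y z.
Proof. by rewrite /qf !mulmxDl mxE. Qed.

Lemma qfZl d (M : 'M[R]_d) a x z : qf M (a *: x) z = a * qf M x z.
Proof. by rewrite /qf -!scalemxAl mxE. Qed.

Lemma qfDr d (M : 'M[R]_d) x y z : qf M z (x + y) = qf M z x + qf M z y.
Proof. by rewrite /qf linearD /= mulmxDr mxE. Qed.

Lemma qfZr d (M : 'M[R]_d) a x z : qf M z (a *: x) = a * qf M z x.
Proof. by rewrite /qf linearZ /= -scalemxAr mxE. Qed.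

Lemma qf_bound d (N : 'M[R]_d) x :
  qf N x x <= (\sum_i \sum_j `|N i j|) * nn x.
Proof.
rewrite qfE mulr_suml; apply: ler_sum => i _; rewrite mulr_suml.
apply: ler_sum => j _.
apply: le_trans (ler_norm _) _.
rewrite !normrM [_ * `|N i j|]mulrC -mulrA ler_wpM2l //.
have hi := coord_le_nn x i; have hj := coord_le_nn x j.
rewrite -[x 0 i ^+ 2](real_normK (num_real _)) in hi.
rewrite -[x 0 j ^+ 2](real_normK (num_real _)) in hj.
have hp := normr_ge0 (x 0 i); have hq := normr_ge0 (x 0 j).
nra.
Qed.

Lemma discr_le (a b c : R) : 0 <= c ->
  (forall t, 0 <= a + 2 * t * b + t ^+ 2 * c) -> b ^+ 2 <= a * c.
Proof.
move=> c0 H; have a0 : 0 <= a by have := H 0; rewrite !(mul0r, mulr0, expr0n) /=; lra.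
have [cpos|] := ltP 0 c.
  have := H (- b / c); set t := - b / c => Ht.
  have tc : t * c = - b by rewrite /t mulrVK // unitfE gt_eqF.
  have e : t ^+ 2 * c = t * (t * c) by rewrite expr2 mulrA.
  have : 0 <= a + t * b by move: Ht; rewrite e tc; lra.
  move=> h; nra.
move=> cle; have c00 : c = 0 by lra.
subst c; rewrite mulr0.
have [b0|bn0] := eqVneq b 0; first by rewrite b0 expr0n.
have := H (- (a + 1) / (2 * b)).
have -> : 2 * (- (a + 1) / (2 * b)) * b = - (a + 1).
  by field; rewrite bn0.
rewrite mulr0; lra.
Qed.


Lemma qf_CS d (M : 'M[R]_d) x y : M^T = M -> (forall z, 0 <= qf M z z) ->
  qf M x y ^+ 2 <= qf M x x * qf M y y.
Proof.
move=> HM Hp; apply: discr_le => // t.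
have -> : qf M x x + 2 * t * qf M x y + t ^+ 2 * qf M y y =
   qf M (x + t *: y) (x + t *: y).
  rewrite !(qfDl, qfDr, qfZl, qfZr) (qf_sym x y HM); ring.
exact: Hp.
Qed.

Lemma qfBm d (M1 M2 : 'M[R]_d) x y : qf (M1 - M2) x y = qf M1 x y - qf M2 x y.
Proof. by rewrite /qf mulmxBr mulmxBl !mxE. Qed.

Lemma qf_scalar d (a : R) (x y : 'rV[R]_d) : qf a%:M x y = a * qf 1%:M x y.
Proof. by rewrite /qf mul_mx_scalar mulmx1 -scalemxAl mxE. Qed.

Lemma nn_const d : nn (const_mx 1 : 'rV[R]_d) = d%:R.
Proof.
rewrite /nn; under eq_bigr do rewrite mxE expr1n.
by rewrite sumr_const card_ord.
Qed.

Lemma spectral_bound d (A : 'M[R]_d) : A^T = A -> (forall x, 0 <= qf A x x) ->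
  (0 < d)%N -> exists l, eigenvalue A l /\ forall x, qf A x x <= l * nn x.
Proof.
move=> HA Hp d0.
pose C := \sum_i \sum_j `|A i j|.
pose T : set R := fun r : R => exists x, r * nn x <= qf A x x /\ 0 < nn x.
have x1 : 0 < nn (const_mx 1 : 'rV[R]_d) by rewrite nn_const ltr0n.
have T0 : T 0 by exists (const_mx 1); rewrite mul0r; split.
have Tub : forall c, (forall x, qf A x x <= c * nn x) -> ubound T c.
  move=> c Hc r [x [h1 h2]]; rewrite -(ler_pM2r h2).
  exact: le_trans h1 (Hc x).
have hs : has_sup T by split; [exists 0 | exists C; apply: Tub => x; exact: qf_bound].
pose m := sup T.
have Hm : forall x, qf A x x <= m * nn x.
  move=> x; have [pos|] := ltP 0 (nn x).
    have nz : nn x != 0 by rewrite gt_eqF.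
    have : T (qf A x x / nn x) by exists x; rewrite divfK.
    move/(sup_upper_bound hs) => h.
    by rewrite -[X in X <= _](divfK nz) ler_pM2r.
  move=> h; have h0 : nn x = 0 by apply/eqP; rewrite eq_le h nn_ge0.
  by rewrite h0 mulr0; have := qf_bound A x; rewrite h0 mulr0.
pose M := m%:M - A.
have MT : M^T = M by rewrite /M linearB /= tr_scalar_mx HA.
have qM : forall x, qf M x x = m * nn x - qf A x x.
  by move=> x; rewrite /M qfBm qf_scalar qf1.
have Mp : forall x, 0 <= qf M x x by move=> x; rewrite qM subr_ge0.
have [Mu|Mnu] := boolP (M \in unitmx).
  pose N := invmx M.
  pose C' := \sum_i \sum_j `|N^T i j|.
  have C'0 : 0 <= C' by apply: sumr_ge0 => i _; apply: sumr_ge0 => j _.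
  have key : forall x, nn x <= C' * qf M x x.
    move=> x; have [pos|] := ltP 0 (nn x); last first.
      by move=> h; apply: le_trans h _; apply: mulr_ge0.
    have e1 : qf M (x *m N) x = nn x.
      by rewrite /qf -(mulmxA x N M) mulVmx // mulmx1 -qf1 /qf mulmx1.
    have e2 : qf M (x *m N) (x *m N) = qf N^T x x.
      rewrite /qf trmx_mul -(mulmxA x N M) mulVmx // mulmx1 !mulmxA.
      by [].
    have cs := qf_CS (x *m N) x MT Mp.
    rewrite e1 e2 in cs.
    have b := qf_bound N^T x.
    have := Mp x => q0.
    have h1 := ler_wpM2r q0 b.
    rewrite -(ler_pM2l pos); move: cs h1; rewrite expr2.
    set a := nn x; set Q := qf N^T x x; set q := qf M x x.
    move=> cs h1; rewrite -/C' in h1; lra.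
  have C'pos : 0 < C'.
    have := key (const_mx 1); have := Mp (const_mx 1).
    rewrite le_eqVlt eq_sym in C'0; case/orP: C'0 => [/eqP ->|//].
    by rewrite mul0r; lra.
  have ub : ubound T (m - C'^-1).
    apply: Tub => x.
    have h2 : C'^-1 * nn x <= m * nn x - qf A x x.
      by rewrite -(ler_pM2l C'pos) mulrA mulfV ?mul1r ?gt_eqF // -qM; exact: key.
    rewrite mulrBl; lra.
  have := ge_sup (ex_intro _ 0 T0) ub; rewrite -/m.
  have := invr_gt0 C'; rewrite C'pos => /idP ?; lra.
exists m; split => //.
have : \det M == 0 by move: Mnu; rewrite unitmxE unitfE negbK.
case/det0P => v vn0 vM; apply/eigenvalueP; exists v => //.
by move: vM; rewrite /M mulmxBr mul_mx_scalar => /eqP; rewrite subr_eq0 => /eqP.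
Qed.

End LA.

Section Main.
Variable R : realType.

Lemma sqnormE d (w : 'cV[R]_d) : sqnorm w = (w^T *m w) 0 0.
Proof. by rewrite /sqnorm /dotv mxE; apply: eq_bigr => i _; rewrite mxE. Qed.

Lemma sqnorm_nn d (v : 'cV[R]_d) : sqnorm v = nn v^T.
Proof. by rewrite /sqnorm /dotv /nn; apply: eq_bigr => i _; rewrite mxE expr2. Qed.

Lemma sqnorm_ge0 d (v : 'cV[R]_d) : 0 <= sqnorm v.
Proof. by rewrite sqnorm_nn nn_ge0. Qed.

Lemma sqnorm0 d : sqnorm (0 : 'cV[R]_d) = 0.
Proof. by rewrite /sqnorm /dotv big1 // => i _; rewrite mxE mul0r. Qed.

Lemma dotvZr d (x y : 'cV[R]_d) a : dotv x (a *: y) = a * dotv x y.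
Proof.
by rewrite /dotv mulr_sumr; apply: eq_bigr => i _; rewrite mxE mulrCA.
Qed.

Lemma sqnormZ d (y : 'cV[R]_d) a : sqnorm (a *: y) = a ^+ 2 * sqnorm y.
Proof.
rewrite /sqnorm /dotv mulr_sumr; apply: eq_bigr => i _; rewrite !mxE expr2.
by rewrite -!mulrA; congr (_ * _); rewrite mulrCA.
Qed.

Lemma sigma_bound s d (B : 'M[R]_(s, d)) v :
  sqnorm (B *m v) <= sigma_max B ^+ 2 * sqnorm v.
Proof.
case: d B v => [|d] B v.
  have -> : v = 0 by apply/matrixP => -[i hi].
  by rewrite mulmx0 !sqnorm0 mulr0.
pose A := B^T *m B.
have HA : A^T = A by rewrite /A trmx_mul trmxK.
have qA : forall x, qf A x x = nn (x *m B^T).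
  by move=> x; rewrite /qf /A -qf1 /qf mulmx1 trmx_mul trmxK !mulmxA.
have Hp : forall x, 0 <= qf A x x by move=> x; rewrite qA nn_ge0.
have [l [el Hl]] := spectral_bound HA Hp (ltn0Sn d).
pose C := \sum_i \sum_j `|A i j|.
rewrite /sigma_max; set E := (X in sup X).
have Eb : forall a, E a -> 0 <= a /\ a <= C.
  move=> a; case/eigenvalueP => w wA wn0.
  have e : qf A w w = a * nn w.
    by rewrite /qf wA -scalemxAl mxE -qf1 /qf mulmx1.
  have np : 0 < nn w.
    rewrite lt0r nn_ge0 andbT; apply/eqP => /nn_eq0 h; by rewrite h eqxx in wn0.
  split; first by have := Hp w; rewrite e pmulr_lge0.
  by rewrite -(ler_pM2r np) -e; exact: qf_bound.
have El : E l by [].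
have hs : has_sup E by split; [exists l | exists C => a /Eb []].
have sE : l <= sup E by exact: sup_upper_bound.
have l0 : 0 <= l by case: (Eb l El).
rewrite sqr_sqrtr; last exact: le_trans l0 sE.
have -> : sqnorm (B *m v) = qf A v^T v^T.
  by rewrite sqnormE /qf /A trmxK trmx_mul !mulmxA.
apply: le_trans (Hl _) _; rewrite -sqnorm_nn.
by apply: ler_wpM2r => //; exact: sqnorm_ge0.
Qed.

End Main.

Theorem lemmaD2 (R : realType) (d s : nat) (G : 'cV[R]_d -> R) (L : R)
  (B : 'M[R]_(s, d)) (b : 'cV[R]_s) (u0 : 'cV[R]_d) (Rr eps : R)
  (ustar unu umin u : 'cV[R]_d) :
  convex_fun G -> L_smooth L G ->
  (exists x : 'cV[R]_d, b = B *m x) ->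
  0 < Rr -> 0 < eps ->
  let nu := eps / Rr ^+ 2 in
  let Gnu := fun v : 'cV[R]_d => G v + nu / 2 * sqnorm (u0 - v) in
  (* u* in Argmin_{Bu=b} G *)
  B *m ustar = b -> (forall v, B *m v = b -> G ustar <= G v) ->
  (* u*_nu = argmin_{Bu=b} G^nu *)
  B *m unu = b -> (forall v, B *m v = b -> Gnu unu <= Gnu v) ->
  (* min_u G(u) exists, attained at umin *)
  (forall v, G umin <= G v) ->
  let D := G ustar - G umin in
  sqnorm (u0 - ustar) <= Rr ^+ 2 ->
  let delta := eps ^+ 2 / (32 * (D + eps / 2) * (L + eps / Rr ^+ 2)) in
  sqnorm (u - unu) <= delta ->
  G u - G ustar <= eps /\
  sqnorm (B *m u - b) <= delta * sigma_max B ^+ 2.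
Proof.
move=> _ [_ Gs] _ R0 e0 nu Gnu hs _ hnu hnumin humin D hR delta hu.
split; last first.
  rewrite -hnu -mulmxBr mulrC; apply: le_trans (sigma_bound _ _) _.
  by apply: ler_wpM2l => //; exact: sqr_ge0.
set h := u - unu.
have q0 := sqnorm_ge0 h.
have H1 := hnumin ustar hs; rewrite /Gnu in H1.
have sq0 := sqnorm_ge0 (u0 - unu).
have R2 : 0 < Rr ^+ 2 by exact: exprn_gt0.
have nu0 : 0 < nu by rewrite /nu divr_gt0.
have Gunu : G unu <= G ustar + eps / 2.
  have a1 : nu / 2 * sqnorm (u0 - ustar) <= nu / 2 * Rr ^+ 2.
    by apply: ler_wpM2l => //; rewrite divr_ge0 // ltW.
  have a2 : nu / 2 * Rr ^+ 2 = eps / 2.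
    by rewrite /nu; field; rewrite gt_eqF.
  have a3 : 0 <= nu / 2 * sqnorm (u0 - unu) by rewrite mulr_ge0 // divr_ge0 // ltW.
  lra.
have Dge0 : 0 <= D by rewrite /D subr_ge0.
set K := D + eps / 2.
have K0 : eps / 2 <= K by rewrite /K; lra.
have Kpos : 0 < K by lra.
set sc := 4 * K / eps.
have scpos : 0 < sc by rewrite /sc divr_gt0 // mulr_gt0.
have sce : sc * eps = 4 * K by rewrite /sc; field; rewrite gt_eqF.
have S1 := Gs unu (unu - sc *: h).
have e : unu - sc *: h - unu = (- sc) *: h.
  by rewrite addrAC subrr add0r scaleNr.
rewrite e dotvZr sqnormZ in S1.
have Gm := humin (unu - sc *: h).
have S2 := Gs unu u; rewrite -/h in S2.
set g := dotv (gradient G unu) h in S1 S2.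
set q := sqnorm h in S1 S2 q0 hu.
have gb : g <= eps / 4 + L * sc * q / 2.
  rewrite -(ler_pM2l scpos).
  have -> : sc * (eps / 4 + L * sc * q / 2) = K + L / 2 * (sc ^+ 2 * q).
    by rewrite /sc; field; rewrite gt_eqF.
  have : G unu - G umin <= K by rewrite /K /D; lra.
  rewrite sqrrN in S1; lra.
have Pb : L * q * (sc + 1) / 2 <= eps / 4.
  have [Lle|Lpos] := lerP L 0.
    have : L * q <= 0 by rewrite mulr_le0_ge0.
    have : 0 < (sc + 1) / 2 by rewrite divr_gt0 //; lra.
    move=> h1 h2.
    have : L * q * ((sc + 1) / 2) <= 0 by rewrite mulr_le0_ge0 // ltW.
    rewrite mulrA; lra.
  have Lnu : 0 < L + eps / Rr ^+ 2 by rewrite addr_gt0 // divr_gt0.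
  have de : 32 * K * (L + eps / Rr ^+ 2) * delta = eps ^+ 2.
    rewrite /delta -/K; field.
    by rewrite (gt_eqF R0) (gt_eqF Kpos) gt_eqF // addr_gt0 // mulr_gt0.
  have b1 : L * q <= L * delta by rewrite ler_wpM2l // ltW.
  have dge0 : 0 <= delta by apply: le_trans hu.
  have b2 : L * delta <= (L + eps / Rr ^+ 2) * delta.
    by rewrite ler_wpM2r // lerDl divr_ge0 // ltW.
  have b3 : 32 * K * (L * q) <= 32 * K * ((L + eps / Rr ^+ 2) * delta).
    by rewrite ler_wpM2l ?mulr_ge0 //; [lra | exact: le_trans b1 b2].
  rewrite [X in _ <= X]mulrA de in b3.
  rewrite -(ler_pM2l (_ : 0 < 64 * K)); last by rewrite mulr_gt0.
  have -> : 64 * K * (L * q * (sc + 1) / 2) = 32 * K * (L * q) * (sc + 1).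
    by field.
  apply: le_trans (ler_wpM2r (_ : 0 <= sc + 1) b3) _; first by lra.
  have -> : eps ^+ 2 * (sc + 1) = eps * (sc * eps) + eps ^+ 2 by rewrite expr2; ring.
  rewrite sce expr2.
  have : eps * eps <= eps * (2 * K) by rewrite ler_pM2l //; lra.
  have -> : 64 * K * (eps / 4) = 16 * (eps * K) by field.
  have : 0 <= eps * K by rewrite mulr_ge0 // ltW.
  lra.
have : L * q * (sc + 1) / 2 = L * sc * q / 2 + L / 2 * q by field.
lra.
Qed.
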